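(* Let $\mathcal Y\subset\mathbb R^d$ be finite with no element a strict convex combination of other elements, $Y$ the $d\times|\mathcal Y|$ matrix with columns $y\in\mathcal Y$, $\kappa>0$, $\xi_1,\dots,\xi_N$ noise samples, $c:\mathcal Y\times\Xi\to\mathbb R$ a cost and $\gamma_i=\gamma(\xi_i)=(c(y,\xi_i))_{y\in\mathcal Y}$. Let $\Omega_\Delta$ be a proper l.s.c. convex function with domain $\Delta^{\mathcal Y}$ whose restriction to the affine hull of $\Delta^{\mathcal Y}$ is Legendre-type, and assume $\Omega_\Delta$ is $L$-strongly convex, meaning that $\nabla\Omega_\Delta^*$ is $\frac1L$-Lipschitz continuous with respect to the Euclidean norm $\|\cdot\|$. Let $R_\Delta(q;\xi)=\langle\gamma(\xi)|q\rangle$, $\underline{S}(\theta;\xi)=\min_{q\in\Delta^{\mathcal Y}}\big[\langle\gamma(\xi)|q\rangle+\kappa\mathcal L_{\Omega_\Delta}(Y^\top\theta;q)\big]$, $\underline{\mathcal S_N}(\theta)=\frac1N\sum_i\underline S(\theta;\xi_i)$ and $\mathcal R_N(\theta)=\frac1N\sum_iR_\Delta(\nabla\Omega_\Delta^*(Y^\top\theta);\xi_i)$. Then for every $\theta\in\mathbb R^d$ and $i\in[N]$, $$\big|R_\Delta(\nabla\Omega_\Delta^*(Y^\top\theta);\xi_i)-\underline S(\theta;\xi_i)\big|\le\frac{3\|\gamma_i\|^2}{2L\kappa},\qquad |\underline{\mathcal S_N}(\theta)-\mathcal R_N(\theta)|\le\frac{3}{2NL\kappa}\sum_{i=1}^N\|\gamma_i\|^2,$$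 and for any $\theta_{\mathcal S}\in\operatorname{argmin}_\theta\underline{\mathcal S_N}(\theta)$ and $\theta_{\mathcal R}\in\operatorname{argmin}_\theta\mathcal R_N(\theta)$, $$\mathcal R_N(\theta_{\mathcal S})-\mathcal R_N(\theta_{\mathcal R})\le\frac{3}{L\kappa N}\sum_{i=1}^N\|\gamma_i\|^2.$$
   Context: $\Delta^{\mathcal Y}=\{q\in\mathbb R^{\mathcal Y}:q\ge0,\sum_yq_y=1\}$. Legendre-type: strictly convex on the interior of its domain, differentiable there with nonempty interior, and gradient norm tending to $+\infty$ at the boundary of the domain (for the restriction to an affine subspace, with respect to that subspace's metric). $\Omega_\Delta^*$ is the Fenchel conjugate and $\mathcal L_{\Omega_\Delta}(s;q)=\Omega_\Delta(q)+\Omega^*_\Delta(s)-\langle s|q\rangle$ is the Fenchel–Young loss. *)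

(* Defs.v *)
From HB Require Import structures.
From mathcomp Require Import all_boot all_order all_algebra.
From mathcomp Require Import classical_sets reals.
Set Implicit Arguments. Unset Strict Implicit. Unset Printing Implicit Defensive.
Import Order.TTheory GRing.Theory Num.Theory.
Local Open Scope ring_scope.
Local Open Scope classical_set_scope.

Definition dot (R : realType) (Y : finType) (u v : Y -> R) : R :=
  \sum_(y : Y) u y * v y.

Definition enorm (R : realType) (Y : finType) (u : Y -> R) : R :=
  Num.sqrt (\sum_(y : Y) u y ^+ 2).

Definition vsub (R : realType) (Y : finType) (u v : Y -> R) : Y -> R :=
  fun y => u y - v y.
Definition vadd (R : realType) (Y : finType) (u v : Y -> R) : Y -> R :=
  fun y => u y + v y.

Definition simplex (R : realType) (Y : finType) : set (Y -> R) :=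
  [set q | (forall y, 0 <= q y) /\ \sum_(y : Y) q y = 1].

Definition rsimplex (R : realType) (Y : finType) : set (Y -> R) :=
  [set q | (forall y, 0 < q y) /\ \sum_(y : Y) q y = 1].

Definition tangent (R : realType) (Y : finType) : set (Y -> R) :=
  [set v | \sum_(y : Y) v y = 0].

(* Omega_Delta is represented by its (finite) values on its domain Delta;
   it is +oo outside Delta, so only values on Delta are ever used. *)

Definition convex_on_simplex (R : realType) (Y : finType) (Om : (Y -> R) -> R) :=
  forall p q t, simplex p -> simplex q -> 0 <= t -> t <= 1 ->
    Om (fun y => t * p y + (1 - t) * q y) <= t * Om p + (1 - t) * Om q.

(* lower semicontinuity (of the extended function, which is +oo off Delta) *)
Definition lsc_on_simplex (R : realType) (Y : finType) (Om : (Y -> R) -> R) :=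
  forall q, simplex q -> forall eps : R, 0 < eps -> exists2 delta : R, 0 < delta &
    forall p, simplex p -> enorm (vsub p q) < delta -> Om q - eps < Om p.

Definition is_rel_gradient (R : realType) (Y : finType) (Om : (Y -> R) -> R)
    (g q : Y -> R) :=
  tangent g /\
  forall eps : R, 0 < eps -> exists2 delta : R, 0 < delta &
    forall h, tangent h -> simplex (vadd q h) -> enorm h < delta ->
      `|Om (vadd q h) - Om q - dot g h| <= eps * enorm h.

Definition vcvg (R : realType) (Y : finType) (u : nat -> Y -> R) (l : Y -> R) :=
  forall eps : R, 0 < eps -> exists M : nat, forall n, (M <= n)%N ->
    enorm (vsub (u n) l) < eps.

Definition legendre_on_aff (R : realType) (Y : finType) (Om : (Y -> R) -> R) :=
  (forall p q t, rsimplex p -> rsimplex q -> p <> q -> 0 < t -> t < 1 ->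
     Om (fun y => t * p y + (1 - t) * q y) < t * Om p + (1 - t) * Om q) /\
  exists gradOm : (Y -> R) -> (Y -> R),
    (forall q, rsimplex q -> is_rel_gradient Om (gradOm q) q) /\
    (forall (u : nat -> Y -> R) (q : Y -> R),
       (forall n, rsimplex (u n)) -> simplex q -> ~ rsimplex q -> vcvg u q ->
       forall B : R, exists M : nat, forall n, (M <= n)%N ->
         B < enorm (gradOm (u n))).

Definition fconj (R : realType) (Y : finType) (Om : (Y -> R) -> R) (s : Y -> R) : R :=
  sup [set dot s q - Om q | q in @simplex R Y].

Definition FYloss (R : realType) (Y : finType) (Om : (Y -> R) -> R) (s q : Y -> R) : R :=
  Om q + fconj Om s - dot s q.

Definition is_gradient (R : realType) (Y : finType) (f : (Y -> R) -> R)
    (g s : Y -> R) :=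
  forall eps : R, 0 < eps -> exists2 delta : R, 0 < delta &
    forall h, enorm h < delta -> `|f (vadd s h) - f s - dot g h| <= eps * enorm h.

(* Y^T theta, where the columns of Y are the points pts y in R^d *)
Definition YT (R : realType) (d : nat) (Y : finType) (pts : Y -> 'I_d -> R)
    (theta : 'I_d -> R) : Y -> R :=
  fun y => \sum_(k < d) pts y k * theta k.

Definition no_convex_comb_of_others (R : realType) (d : nat) (Y : finType)
    (pts : Y -> 'I_d -> R) :=
  forall y, ~ exists lam : Y -> R,
    (forall z, 0 <= lam z) /\ lam y = 0 /\ \sum_(z : Y) lam z = 1 /\
    forall k, pts y k = \sum_(z : Y) lam z * pts z k.

Definition gamma (R : realType) (Y : finType) (Xi : Type) (c : Y -> Xi -> R)
    (x : Xi) : Y -> R := fun y => c y x.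

Definition RDelta (R : realType) (Y : finType) (Xi : Type) (c : Y -> Xi -> R)
    (q : Y -> R) (x : Xi) : R := dot (gamma c x) q.

Definition Slow (R : realType) (d : nat) (Y : finType) (Xi : Type)
    (pts : Y -> 'I_d -> R) (c : Y -> Xi -> R) (kappa : R) (Om : (Y -> R) -> R)
    (theta : 'I_d -> R) (x : Xi) : R :=
  inf [set dot (gamma c x) q + kappa * FYloss Om (YT pts theta) q | q in @simplex R Y].

Definition SN (R : realType) (d : nat) (Y : finType) (Xi : Type)
    (pts : Y -> 'I_d -> R) (c : Y -> Xi -> R) (kappa : R) (Om : (Y -> R) -> R)
    (N : nat) (xi : 'I_N -> Xi) (theta : 'I_d -> R) : R :=
  N%:R^-1 * \sum_(i < N) Slow pts c kappa Om theta (xi i).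

Definition RN (R : realType) (d : nat) (Y : finType) (Xi : Type)
    (pts : Y -> 'I_d -> R) (c : Y -> Xi -> R) (gradOmStar : (Y -> R) -> (Y -> R))
    (N : nat) (xi : 'I_N -> Xi) (theta : 'I_d -> R) : R :=
  N%:R^-1 * \sum_(i < N) RDelta c (gradOmStar (YT pts theta)) (xi i).

Definition is_argmin (R : realType) (d : nat) (F : ('I_d -> R) -> R) (t : 'I_d -> R) :=
  forall t', F t <= F t'.

(* Main.v *)
Require Import Defs.
From HB Require Import structures.
From mathcomp Require Import all_boot all_order all_algebra.
From mathcomp Require Import classical_sets reals.
From mathcomp Require Import boolp ring lra.
Import Order.TTheory GRing.Theory Num.Theory.
Local Open Scope ring_scope.
Local Open Scope classical_set_scope.

Section Helpers.
Variables (R : realType) (Y : finType).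

Lemma enorm_sq (u : Y -> R) : enorm u ^+ 2 = \sum_y u y ^+ 2.
Proof. by rewrite /enorm sqr_sqrtr // sumr_ge0 // => y _; exact: sqr_ge0. Qed.

Lemma enorm_ge0 (u : Y -> R) : 0 <= enorm u.
Proof. exact: sqrtr_ge0. Qed.

Lemma le_single (f : Y -> R) y0 : (forall y, 0 <= f y) -> f y0 <= \sum_y f y.
Proof. by move=> h; rewrite (bigD1 y0) //= lerDl sumr_ge0. Qed.

Lemma enormZ (t : R) (v : Y -> R) : 0 <= t -> enorm (fun y => t * v y) = t * enorm v.
Proof.
move=> t0; rewrite /enorm.
under eq_bigr do rewrite exprMn.
by rewrite -mulr_sumr sqrtrM ?sqr_ge0 // sqrtr_sqr ger0_norm.
Qed.

Definition Aset (Om : (Y -> R) -> R) (s : Y -> R) : set R :=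
  [set dot s q - Om q | q in @simplex R Y].

Lemma fconjE Om s : fconj Om s = sup (Aset Om s).
Proof. by []. Qed.

Lemma simplex_le1 (q : Y -> R) y : simplex q -> q y <= 1.
Proof. by move=> [h1 h2]; rewrite -h2 le_single. Qed.

Lemma ub_transfer Om s t : has_ubound (Aset Om s) -> has_ubound (Aset Om t).
Proof.
move=> [M hM]; exists (M + \sum_y `|t y - s y|) => z [q hq <-].
have := hM _ (ex_intro2 _ _ q hq erefl).
have : dot t q - dot s q <= \sum_y `|t y - s y|.
  rewrite /dot -sumrB; apply: ler_sum => y _.
  rewrite -mulrBl; apply: (le_trans (ler_norm _)).
  rewrite normrM; have [q0 _] := hq.
  by rewrite (ger0_norm (q0 y)) ler_piMr // simplex_le1.
lra.
Qed.

Lemma simplex_ne : (0 < #|Y|)%N -> exists q, @simplex R Y q.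
Proof.
move=> hY; exists (fun _ => #|Y|%:R^-1); split => [y|].
  by rewrite invr_ge0 ler0n.
rewrite sumr_const.
have -> : #|[pred _ : Y | true]| = #|Y| by apply: eq_card.
rewrite -[X in X = 1]mulr_natr mulVf // pnatr_eq0 -lt0n //.
Qed.

Lemma sup_aff (S A : set R) k c : 0 < k -> A !=set0 ->
  (forall z, S z <-> exists2 a, A a & z = k * a + c) ->
  (has_ubound A -> sup S = k * sup A + c) /\ (~ has_ubound A -> sup S = 0).
Proof.
move=> k0 [a0 Aa0] hS; split.
- move=> ubA.
  have ubS : ubound S (k * sup A + c).
    move=> z /hS [a Aa ->]; rewrite lerD2r ler_pM2l //; exact: ub_le_sup.
  have neS : S !=set0 by exists (k * a0 + c); apply/hS; exists a0.
  have hsS : has_ubound S by exists (k * sup A + c).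
  apply/le_anti/andP; split; first exact: ge_sup.
  rewrite -lerBrDr mulrC -ler_pdivlMr //; apply: ge_sup; first by exists a0.
  move=> a Aa; rewrite ler_pdivlMr // lerBrDr mulrC; apply: ub_le_sup => //.
  by apply/hS; exists a.
- move=> nub; apply: sup_out => -[_ [M hM]]; apply: nub.
  exists ((M - c) / k) => a Aa; rewrite ler_pdivlMr // lerBrDr mulrC.
  by apply: hM; apply/hS; exists a.
Qed.


Lemma dot_lin (s u q : Y -> R) (a b : R) :
  dot (fun y => a * s y + b * u y) q = a * dot s q + b * dot u q.
Proof.
rewrite /dot !mulr_sumr -big_split; apply: eq_bigr => y _ /=; ring.
Qed.

Lemma fconj_conv Om (s t : Y -> R) (tau : R) : (0 < #|Y|)%N -> 0 <= tau -> tau <= 1 ->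
  fconj Om (fun y => s y + tau * (t y - s y)) <= (1 - tau) * fconj Om s + tau * fconj Om t.
Proof.
move=> hY t0 t1; case: (pselect (has_ubound (Aset Om s))) => hb.
- have hbt : has_ubound (Aset Om t) by apply: ub_transfer hb.
  have [q0 hq0] := simplex_ne hY.
  rewrite fconjE; apply: ge_sup.
    by exists (dot (fun y => s y + tau * (t y - s y)) q0 - Om q0); exists q0.
  move=> z [q hq <-].
  have -> : (fun y => s y + tau * (t y - s y)) = (fun y => (1 - tau) * s y + tau * t y).
    by apply: funext => y; ring.
  rewrite dot_lin.
  have h1 : dot s q - Om q <= fconj Om s by apply: ub_le_sup => //; exists q.
  have h2 : dot t q - Om q <= fconj Om t by apply: ub_le_sup => //; exists q.
  have h3 : 0 <= 1 - tau by rewrite subr_ge0.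
  have := ler_wpM2l h3 h1; have := ler_wpM2l t0 h2; lra.
- have nb u : ~ has_sup (Aset Om u) by move=> [_ /(ub_transfer _ _ s)].
  by rewrite !fconjE !sup_out // !mulr0 addr0.
Qed.

Lemma Slow_id Om (g s : Y -> R) k : (0 < #|Y|)%N -> 0 < k ->
  inf [set dot g q + k * FYloss Om s q | q in @simplex R Y] =
  k * (fconj Om s - fconj Om (fun y => s y - g y / k)).
Proof.
move=> hY k0; set t := (fun y => s y - g y / k).
have dt q : dot t q = dot s q - dot g q / k.
  rewrite /dot /t mulr_suml -sumrB; apply: eq_bigr => y _; by field; rewrite gt_eqF.
have [q0 hq0] := simplex_ne hY.
have := @sup_aff (-%R @` [set dot g q + k * FYloss Om s q | q in @simplex R Y])
   (Aset Om t) k (- (k * fconj Om s)) k0.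
case.
- by exists (dot t q0 - Om q0); exists q0.
- move=> z; split.
    move=> [e [q hq <-] <-]; exists (dot t q - Om q); first by exists q.
    rewrite dt /FYloss; by field; rewrite gt_eqF.
  move=> [a [q hq <-] ->]; exists (dot g q + k * FYloss Om s q); first by exists q.
  rewrite dt /FYloss; by field; rewrite gt_eqF.
move=> hb hnb; rewrite /inf.
case: (pselect (has_ubound (Aset Om t))) => h.
  by rewrite hb // !fconjE; ring.
have nb u : ~ has_sup (Aset Om u) by move=> [_ /(ub_transfer _ _ t)].
by rewrite hnb // !fconjE !sup_out // subrr mulr0 oppr0.
Qed.


Lemma grad_ineq (F : (Y -> R) -> R) (g s t : Y -> R) :
  (forall s t tau, 0 <= tau -> tau <= 1 ->
     F (fun y => s y + tau * (t y - s y)) <= (1 - tau) * F s + tau * F t) ->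
  is_gradient F g s -> F s + dot g (fun y => t y - s y) <= F t.
Proof.
move=> conv gr; set v := fun y => t y - s y.
apply/ler_addgt0Pr => e e0.
set n := enorm v.
have n0 : 0 <= n := enorm_ge0 v.
have n1 : 0 < n + 1 by lra.
have [del del0 hd] := gr (e / (n + 1)) (divr_gt0 e0 n1).
have dn : 0 < del + n by lra.
set tau := del / (del + n).
have tpos : 0 < tau by apply: divr_gt0.
have t1 : tau <= 1 by rewrite /tau ler_pdivrMr // mul1r; lra.
have htn : tau * n < del.
  rewrite /tau mulrAC ltr_pdivrMr //; nra.
set h := fun y => tau * v y.
have nh : enorm h = tau * n := enormZ tau v (ltW tpos).
have := hd h ltac:(by rewrite nh).
have cv := conv s t tau (ltW tpos) t1.
have dh : dot g h = tau * dot g v.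
  by rewrite /dot mulr_sumr; apply: eq_bigr => y _; rewrite /h; ring.
rewrite nh dh /vadd -/v.
set X := F _.
have -> : X = F (fun y => s y + tau * (t y - s y)) by [].
move=> /ler_normlP [hb _].
have en : e / (n + 1) * n <= e.
  rewrite mulrAC ler_pdivrMr //; nra.
have key : tau * (F s + dot g v - F t - e / (n + 1) * n) <= 0 by nra.
have : F s + dot g v - F t - e / (n + 1) * n <= 0.
  by rewrite -(pmulr_rle0 _ tpos).
lra.
Qed.


Lemma amgm (L a b : R) : 0 < L -> a * b <= (L * a ^+ 2 + b ^+ 2 / L) / 2.
Proof.
move=> L0; have h : 0 <= (L * a - b) ^+ 2 / L by rewrite divr_ge0 ?sqr_ge0 ?ltW.
have e : (L * a - b) ^+ 2 / L = L * a ^+ 2 - 2 * (a * b) + b ^+ 2 / L.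
  by field; rewrite gt_eqF.
lra.
Qed.

Lemma main_bound (F : (Y -> R) -> R) (G : (Y -> R) -> (Y -> R)) (gm s : Y -> R) (k L : R) :
  0 < k -> 0 < L ->
  (forall s t tau, 0 <= tau -> tau <= 1 ->
     F (fun y => s y + tau * (t y - s y)) <= (1 - tau) * F s + tau * F t) ->
  (forall s, is_gradient F (G s) s) ->
  (forall s t, enorm (vsub (G s) (G t)) <= L^-1 * enorm (vsub s t)) ->
  `|dot gm (G s) - k * (F s - F (fun y => s y - gm y / k))| <= enorm gm ^+ 2 / (L * k).
Proof.
move=> k0 L0 conv gr lip.
set t := fun y => s y - gm y / k.
set hh := fun y => gm y / k.
have kn : k != 0 by rewrite gt_eqF.
have Ln : L != 0 by rewrite gt_eqF.
have h1 := @grad_ineq F (G s) s t conv (gr s).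
have h2 := @grad_ineq F (G t) t s conv (gr t).
set D := dot gm (G s).
have e1 : dot (G s) (fun y => t y - s y) = - (D / k).
  rewrite /D /dot /t mulr_suml -sumrN; apply: eq_bigr => y _; by field.
set E1 := dot (G t) (fun y => s y - t y).
set W := \sum_y (G s y - G t y) ^+ 2.
set H := \sum_y hh y ^+ 2.
have eP : D / k - E1 = \sum_y (G s y - G t y) * hh y.
  rewrite /D /E1 /dot /t /hh mulr_suml -sumrB; apply: eq_bigr => y _; by field.
have hP : \sum_y (G s y - G t y) * hh y <= (L * W + H / L) / 2.
  rewrite /W /H mulr_sumr mulr_suml -big_split mulr_suml /=.
  apply: ler_sum => y _; exact: amgm.
have hW : W <= H / L ^+ 2.
  have l := lip s t.
  have ehh : vsub s t = hh by apply: funext => y; rewrite /vsub /t /hh; ring.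
  rewrite ehh in l.
  have a0 := enorm_ge0 (vsub (G s) (G t)).
  have b0 := enorm_ge0 hh.
  have : enorm (vsub (G s) (G t)) ^+ 2 <= (L^-1 * enorm hh) ^+ 2.
    rewrite ler_sqr ?nnegrE // mulr_ge0 // invr_ge0 ltW //.
  rewrite !enorm_sq exprMn -/H.
  have -> : \sum_y vsub (G s) (G t) y ^+ 2 = W by [].
  by rewrite [enorm hh ^+ 2]enorm_sq -/H exprVn mulrC.
have hH : H = enorm gm ^+ 2 / k ^+ 2.
  rewrite enorm_sq /H /hh mulr_suml; apply: eq_bigr => y _; by field.
have H0 : 0 <= H by rewrite /H sumr_ge0 // => y _; exact: sqr_ge0.
have hLW : L * W <= H / L.
  have := ler_wpM2l (ltW L0) hW.
  have -> : L * (H / L ^+ 2) = H / L by field.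
  by [].
have hup : D - k * (F s - F t) <= k * (H / L).
  have : k * (D / k - E1) <= k * (H / L).
    rewrite ler_pM2l // eP; apply: (le_trans hP); lra.
  have -> : k * (D / k - E1) = D - k * E1 by field.
  have := ler_wpM2l (ltW k0) (h2 : F t + E1 <= F s).
  lra.
have hlow : 0 <= D - k * (F s - F t).
  rewrite e1 in h1.
  have := ler_wpM2l (ltW k0) h1.
  have -> : k * (F s + - (D / k)) = k * F s - D by field.
  lra.
have -> : enorm gm ^+ 2 / (L * k) = k * (H / L).
  by rewrite hH; field; rewrite Ln kn.
rewrite ler_norml; apply/andP; split => //.
have : 0 <= k * (H / L) by apply: mulr_ge0; [exact: ltW | exact: divr_ge0 H0 (ltW L0)].
lra.
Qed.

End Helpers.

Theorem theorem2 (R : realType) (d : nat) (Y : finType) (pts : Y -> 'I_d -> R)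
    (Xi : Type) (c : Y -> Xi -> R) (N : nat) (xi : 'I_N -> Xi) (kappa L : R)
    (Om : (Y -> R) -> R) (gradOmStar : (Y -> R) -> (Y -> R)) :
  no_convex_comb_of_others pts ->
  0 < kappa ->
  (0 < #|Y|)%N ->
  convex_on_simplex Om ->
  lsc_on_simplex Om ->
  legendre_on_aff Om ->
  0 < L ->
  (forall s, is_gradient (fconj Om) (gradOmStar s) s) ->
  (forall s t, enorm (vsub (gradOmStar s) (gradOmStar t)) <= L^-1 * enorm (vsub s t)) ->
  (forall (theta : 'I_d -> R) (i : 'I_N),
     `|RDelta c (gradOmStar (YT pts theta)) (xi i) - Slow pts c kappa Om theta (xi i)|
       <= 3 * enorm (gamma c (xi i)) ^+ 2 / (2 * L * kappa)) /\
  (forall theta : 'I_d -> R,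
     `|SN pts c kappa Om xi theta - RN pts c gradOmStar xi theta|
       <= 3 / (2 * N%:R * L * kappa) * \sum_(i < N) enorm (gamma c (xi i)) ^+ 2) /\
  (forall thS thR : 'I_d -> R,
     is_argmin (SN pts c kappa Om xi) thS ->
     is_argmin (RN pts c gradOmStar xi) thR ->
     RN pts c gradOmStar xi thS - RN pts c gradOmStar xi thR
       <= 3 / (L * kappa * N%:R) * \sum_(i < N) enorm (gamma c (xi i)) ^+ 2).
Proof.
move=> _ k0 hY _ _ _ L0 gr lip.
have kn : kappa != 0 by rewrite gt_eqF.
have Ln : L != 0 by rewrite gt_eqF.
have conv := fun s t tau t0 t1 => @fconj_conv R Y Om s t tau hY t0 t1.
have per theta i :
   `|RDelta c (gradOmStar (YT pts theta)) (xi i) - Slow pts c kappa Om theta (xi i)|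
       <= enorm (gamma c (xi i)) ^+ 2 / (L * kappa).
  rewrite /RDelta /Slow Slow_id //; exact: main_bound.
have per3 theta i :
   `|RDelta c (gradOmStar (YT pts theta)) (xi i) - Slow pts c kappa Om theta (xi i)|
       <= 3 * enorm (gamma c (xi i)) ^+ 2 / (2 * L * kappa).
  apply: (le_trans (per theta i)).
  have g0 : 0 <= enorm (gamma c (xi i)) ^+ 2 / (L * kappa).
    by rewrite divr_ge0 ?sqr_ge0 // mulr_ge0 // ltW.
  have -> : 3 * enorm (gamma c (xi i)) ^+ 2 / (2 * L * kappa) =
            3 / 2 * (enorm (gamma c (xi i)) ^+ 2 / (L * kappa)) by field; rewrite Ln kn.
  lra.
have part2 theta :
     `|SN pts c kappa Om xi theta - RN pts c gradOmStar xi theta|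
       <= 3 / (2 * N%:R * L * kappa) * \sum_(i < N) enorm (gamma c (xi i)) ^+ 2.
  rewrite /SN /RN -mulrBr -sumrB normrM ger0_norm ?invr_ge0 ?ler0n //.
  have -> : 3 / (2 * N%:R * L * kappa) * \sum_(i < N) enorm (gamma c (xi i)) ^+ 2
      = N%:R^-1 * \sum_(i < N) (3 * enorm (gamma c (xi i)) ^+ 2 / (2 * L * kappa)).
    rewrite -[X in _ = _ * X]mulr_suml.
    by rewrite -mulr_sumr !invfM; ring.
  apply: ler_wpM2l; first by rewrite invr_ge0 ler0n.
  apply: (le_trans (ler_norm_sum _ _ _)); apply: ler_sum => i _.
  by rewrite distrC; exact: per3.
split; first exact: per3.
split; first exact: part2.
move=> thS thR hS hR.
have a := part2 thS; have b := part2 thR; have e := hS thR.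
move: a b => /ler_normlP [a1 a2] /ler_normlP [b1 b2].
have -> : 3 / (L * kappa * N%:R) * \sum_(i < N) enorm (gamma c (xi i)) ^+ 2 =
   2 * (3 / (2 * N%:R * L * kappa) * \sum_(i < N) enorm (gamma c (xi i)) ^+ 2).
  by rewrite !invfM; set x := N%:R^-1; field; rewrite kn Ln.
lra.
Qed.
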